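(* Let $G$ be a finite Abelian group, let $\hat G$ be its set of irreducible (one-dimensional) representations (characters) $\mu:G\to\mathbb{C}$, and let $g\mapsto U_g$ be a unitary representation of $G$ on a Hilbert space $\mathcal{H}$ having an orthonormal basis $\{|v_\mu\rangle\}_{\mu\in\hat G}$ with $U_g|v_\mu\rangle=\mu(g)|v_\mu\rangle$ for all $g\in G$, $\mu\in\hat G$. Let $|\psi\rangle=\sum_{\mu\in\hat G}a_\mu|v_\mu\rangle$ be a unit vector, and let $\mu_0\in\hat G$ satisfy $|a_{\mu_0}|\ge|a_\mu|$ for all $\mu\in\hat G$. Then conclusive single-state exclusion of the set $\{U_g|\psi\rangle: g\in G\}$ can be done, i.e., there exists a POVM $\{M_g\}_{g\in G}$ on $\mathcal{H}$ with $\langle\psi|U_g^\dagger M_gU_g|\psi\rangle=0$ for all $g\in G$, if and only if $$|a_{\mu_0}|\le\sum_{\mu\in\hat G,\ \mu\neq\mu_0}|a_\mu|.$$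
   Context: A POVM $\{M_g\}_{g\in G}$ on $\mathcal{H}$ is a family of positive semidefinite operators with $\sum_{g\in G}M_g=I_{\mathcal{H}}$. Conclusive single-state exclusion of $\{|u_g\rangle\}_{g\in G}$ means the existence of a POVM with $\operatorname{tr}[M_g|u_g\rangle\langle u_g|]=0$ for all $g$. *)

(* Defs.v *)
From HB Require Import structures.
From mathcomp Require Import all_boot all_order all_algebra all_fingroup all_solvable all_field all_character.
Set Implicit Arguments. Unset Strict Implicit. Unset Printing Implicit Defensive.
Import Order.TTheory GRing.Theory Num.Theory.
Local Open Scope ring_scope.

Definition adjmx (m p : nat) (A : 'M[algC]_(m, p)) : 'M[algC]_(p, m) :=
  (map_mx Num.conj A)^T.

Definition psd (n : nat) (M : 'M[algC]_n) : Prop :=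
  adjmx M = M /\ forall x : 'cV[algC]_n, 0 <= (adjmx x *m M *m x) 0 0.

Definition POVM (gT : finGroupType) (G : {group gT}) (n : nat)
  (M : gT -> 'M[algC]_n) : Prop :=
  (forall g, g \in G -> psd (M g)) /\ \sum_(g in G) M g = 1%:M.

Definition ketbra (n : nat) (u : 'cV[algC]_n) : 'M[algC]_n := u *m adjmx u.

Definition conclusive_exclusion (gT : finGroupType) (G : {group gT}) (n : nat)
  (u : gT -> 'cV[algC]_n) : Prop :=
  exists M : gT -> 'M[algC]_n, POVM G M /\
    forall g, g \in G -> \tr (M g *m ketbra (u g)) = 0.

(* Main.v *)
Require Import Defs.
From HB Require Import structures.
From mathcomp Require Import all_boot all_order all_algebra all_fingroup all_solvable all_field all_character.
From mathcomp Require Import ring lra.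
Import Order.TTheory GRing.Theory Num.Theory.
Local Open Scope ring_scope.

Module Helpers.
Set Implicit Arguments. Unset Strict Implicit. Unset Printing Implicit Defensive.

Lemma adjmxE m p (A : 'M[algC]_(m, p)) i j : adjmx A i j = (A j i)^*.
Proof. by rewrite /adjmx !mxE. Qed.

Lemma adjmxK m p (A : 'M[algC]_(m, p)) : adjmx (adjmx A) = A.
Proof. by apply/matrixP=> i j; rewrite !adjmxE conjCK. Qed.

Lemma adjmxD m p (A B : 'M[algC]_(m, p)) : adjmx (A + B) = adjmx A + adjmx B.
Proof. by apply/matrixP=> i j; rewrite !(adjmxE, mxE) rmorphD. Qed.

Lemma adjmxZ m p c (A : 'M[algC]_(m, p)) : adjmx (c *: A) = c^* *: adjmx A.
Proof. by apply/matrixP=> i j; rewrite !(adjmxE, mxE) rmorphM. Qed.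

Lemma adjmx_sum m p (I : finType) (P : pred I) (F : I -> 'M[algC]_(m, p)) :
  adjmx (\sum_(i | P i) F i) = \sum_(i | P i) adjmx (F i).
Proof. by apply/matrixP=> i j; rewrite adjmxE !summxE rmorph_sum; apply: eq_bigr => k _; rewrite adjmxE. Qed.

Lemma adjmxM m p q (A : 'M[algC]_(m, p)) (B : 'M[algC]_(p, q)) :
  adjmx (A *m B) = adjmx B *m adjmx A.
Proof. by rewrite /adjmx map_mxM trmx_mul. Qed.

Lemma adjmx1 m : adjmx (1%:M : 'M[algC]_m) = 1%:M.
Proof. by apply/matrixP=> i j; rewrite adjmxE !mxE conjC_nat eq_sym. Qed.

Lemma adjmx0 m p : adjmx (0 : 'M[algC]_(m,p)) = 0.
Proof. by apply/matrixP=> i j; rewrite adjmxE !mxE conjC0. Qed.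

Definition Bf n (N : 'M[algC]_n) (y x : 'cV[algC]_n) : algC := (adjmx y *m N *m x) 0 0.

Lemma Bexp n (N : 'M[algC]_n) x y t :
  Bf N (x + t *: y) (x + t *: y) = Bf N x x + t * Bf N x y + t^* * Bf N y x + t^* * t * Bf N y y.
Proof.
rewrite /Bf adjmxD adjmxZ !mulmxDl !mulmxDr -!scalemxAl -!scalemxAr !mxE.
ring.
Qed.

Lemma Bsym n (N : 'M[algC]_n) x y : adjmx N = N -> Bf N x y = (Bf N y x)^*.
Proof.
move=> hN; rewrite /Bf -adjmxE !adjmxM adjmxK hN mulmxA //.
Qed.

Lemma L2 n (N : 'M[algC]_n) y w : psd N -> Bf N y y = 1 -> Bf N w w = 1 ->
  `|Bf N y w| <= 1.
Proof.
case=> hH hP hy hw; set b := Bf N y w.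
have [->|b0] := eqVneq b 0; first by rewrite normr0 ler01.
set r := `|b|.
have r0 : r != 0 by rewrite normr_eq0.
have e : b * b^* = r ^+ 2 by rewrite normCK.
have hb' : Bf N w y = b^* by rewrite Bsym.
have : 0 <= Bf N (y + (- (b^* / r)) *: w) (y + (- (b^* / r)) *: w) by apply: hP.
rewrite Bexp hy hw hb' -/b.
rewrite rmorphN rmorphM /= conjCK fmorphV /= conj_normC -/r.
have -> : 1 + - (b^* / r) * b + - (b / r) * b^* + - (b / r) * - (b^* / r) * 1
   = 1 - 2 * (b * b^*) / r + (b * b^*) / r ^+ 2 by field.
rewrite e.
have -> : 1 - 2 * r ^+ 2 / r + r ^+ 2 / r ^+ 2 = 2 * (1 - r) by field.
by rewrite pmulr_rge0 ?ltr0n // subr_ge0.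
Qed.

Lemma L1 n (N : 'M[algC]_n) x y : psd N -> Bf N x x = 0 -> Bf N y x = 0.
Proof.
case=> hH hP hx; set b := Bf N y x; set q := Bf N y y.
have q0 : 0 <= q by apply: hP.
have qc : q^* = q by apply: conj_Creal; apply: ger0_real.
have q1 : 1 + q != 0 by rewrite gt_eqF // ltr_pwDl.
have hb' : Bf N x y = b^* by rewrite Bsym.
have : 0 <= Bf N (x + (- ((1 + q)^-1 * b)) *: y) (x + (- ((1 + q)^-1 * b)) *: y) by apply: hP.
rewrite Bexp hx hb' -/b -/q rmorphN rmorphM /= fmorphV /= rmorphD /= conjC1 qc.
have -> : 0 + - ((1 + q)^-1 * b) * b^* + - ((1 + q)^-1 * b^*) * b +
   - ((1 + q)^-1 * b^*) * - ((1 + q)^-1 * b) * q = - ((b * b^*) * ((q + 2) / (1 + q) ^+ 2)) by field.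
rewrite oppr_ge0 pmulr_lle0; last first.
  apply: divr_gt0; first by rewrite ltr_wpDl. by rewrite exprn_gt0 // ltr_wpDr.
move=> h; have : b * b^* == 0 by rewrite eq_le h mul_conjC_ge0.
by rewrite mulf_eq0 conjC_eq0 orbb => /eqP.
Qed.

Lemma Bf_sumr n (N : 'M[algC]_n) (I : finType) (P : pred I) y (F : I -> 'cV[algC]_n) :
  Bf N y (\sum_(i | P i) F i) = \sum_(i | P i) Bf N y (F i).
Proof. by rewrite /Bf mulmx_sumr summxE. Qed.

Lemma Bf_sumM n (I : finType) (P : pred I) (F : I -> 'M[algC]_n) y x :
  Bf (\sum_(i | P i) F i) y x = \sum_(i | P i) Bf (F i) y x.
Proof. by rewrite /Bf mulmx_sumr mulmx_suml summxE. Qed.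

Lemma Bf_scaler n (N : 'M[algC]_n) y c x : Bf N y (c *: x) = c * Bf N y x.
Proof. by rewrite /Bf -scalemxAr mxE. Qed.

Lemma Bf_scalel n (N : 'M[algC]_n) y c x : Bf N (c *: y) x = c^* * Bf N y x.
Proof. by rewrite /Bf adjmxZ -!scalemxAl mxE. Qed.

Lemma Bf_conj n (N A : 'M[algC]_n) y x : Bf (adjmx A *m N *m A) y x = Bf N (A *m y) (A *m x).
Proof. by rewrite /Bf adjmxM !mulmxA. Qed.

Lemma tr_ketbra n (M : 'M[algC]_n) u : \tr (M *m ketbra u) = Bf M u u.
Proof.
by rewrite /ketbra mulmxA mxtrace_mulC /mxtrace big_ord1 /Bf mulmxA.
Qed.

Lemma only_if (gT : finGroupType) (G : {group gT}) 
  (n : nat) (v : Iirr G -> 'cV[algC]_n) (U : gT -> 'M[algC]_n)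
  (v_orth : forall i j, adjmx (v i) *m v j = (i == j)%:R%:M)
  (U_unitary : forall g, g \in G ->
                 adjmx (U g) *m U g = 1%:M /\ U g *m adjmx (U g) = 1%:M)
  (U_eig : forall g i, g \in G -> U g *m v i = 'chi_i g *: v i)
  (a : Iirr G -> algC) (i0 : Iirr G) :
  conclusive_exclusion G (fun g => U g *m (\sum_i a i *: v i))
  -> `|a i0| <= \sum_(i | i != i0) `|a i|.
Proof.
case=> M [[Mpsd Msum] hex].
set psi := \sum_i a i *: v i in hex *.
set N := \sum_(g in G) adjmx (U g) *m M g *m U g.
have BN y x : Bf N y x = \sum_(g in G) Bf (M g) (U g *m y) (U g *m x).
  by rewrite Bf_sumM; apply: eq_bigr => g _; rewrite Bf_conj.
have Npsd : psd N.
  split.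
    rewrite /N adjmx_sum; apply: eq_bigr => g gG.
    by rewrite !adjmxM adjmxK (proj1 (Mpsd g gG)) mulmxA.
  move=> x; rewrite -/(Bf N x x) BN; apply: sumr_ge0 => g gG.
  exact: (proj2 (Mpsd g gG)).
have Npsi : Bf N psi psi = 0.
  by rewrite BN big1 // => g gG; rewrite -tr_ketbra hex.
have h0 := L1 (v i0) Npsd Npsi.
have vv i j : Bf 1%:M (v i) (v j) = (i == j)%:R.
  by rewrite /Bf mulmx1 v_orth mxE eqxx mulr1n.
have Nii i : Bf N (v i) (v i) = 1.
  transitivity (Bf (\sum_(g in G) M g) (v i) (v i)); last by rewrite Msum vv eqxx.
  rewrite BN Bf_sumM; apply: eq_bigr => g gG.
  rewrite U_eig // Bf_scalel Bf_scaler mulrA.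
  have : adjmx (U g *m v i) *m (U g *m v i) = 1%:M.
    by rewrite adjmxM mulmxA -(mulmxA _ (adjmx (U g))) (proj1 (U_unitary g gG)) mulmx1 v_orth eqxx.
  rewrite U_eig // adjmxZ -scalemxAl -scalemxAr v_orth eqxx scalerA => /matrixP /(_ 0 0).
  by rewrite !mxE eqxx /= !mulr1n mulr1 => ->; rewrite mul1r.
have bnd j : `|Bf N (v i0) (v j)| <= 1 by apply: L2.
move: h0; rewrite /psi Bf_sumr (bigD1 i0) //= Bf_scaler Nii mulr1 => /eqP.
rewrite addr_eq0 => /eqP ->; rewrite normrN.
apply: le_trans (ler_norm_sum _ _ _) _; apply: ler_sum => j _.
rewrite Bf_scaler normrM; apply: ler_piMr => //.
Qed.

Lemma norm1_sq (u : algC) : `|u| ^+ 2 = 1 -> `|u| = 1.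
Proof. by move=> h; apply/eqP; rewrite -(@eqrXn2 _ 2) // h expr1n. Qed.

Lemma tri (r0 x y : algR) : 0 < r0 -> 0 <= x -> 0 <= y -> r0 <= x + y ->
  x - y <= r0 -> y - x <= r0 ->
  exists z w : algC, [/\ `|z| = 1, `|w| = 1 &
     algRval r0 + algRval x * z + algRval y * w = 0].
Proof.
move=> r0p x0 y0 h1 h2 h3.
have [xe|xn] := eqVneq x 0.
  have ye : y = r0 by lra.
  exists 1, (-1); rewrite normrN normr1 xe ye rmorph0; split => //; ring.
have [ye|yn] := eqVneq y 0.
  have xe : x = r0 by lra.
  exists (-1), 1; rewrite normrN normr1 xe ye rmorph0; split => //; ring.
have xp : 0 < x by rewrite lt_def xn.
have yp : 0 < y by rewrite lt_def yn.
set D := x ^+ 2 - r0 ^+ 2 - y ^+ 2.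
set g := D / (2 * r0 * y).
have r0n : r0 != 0 by rewrite gt_eqF.
have two : (2:algR) != 0 by rewrite pnatr_eq0.
have hg : 2 * r0 * y * g = D by rewrite /g mulrC divfK // !mulf_neq0.
have hD : D ^+ 2 <= (2 * r0 * y) ^+ 2.
  have e1 : (2 * r0 * y) ^+ 2 - D ^+ 2 = ((r0 + y - x) * (r0 + y + x)) * ((x - r0 + y) * (x + r0 - y)) by rewrite /D; ring.
  rewrite -subr_ge0 e1; apply: mulr_ge0; apply: mulr_ge0; lra.
have hg1 : 0 <= 1 - g ^+ 2.
  have p : 0 < (2 * r0 * y) ^+ 2 by apply: exprn_gt0; apply: mulr_gt0 => //; apply: mulr_gt0.
  have : g ^+ 2 * (2 * r0 * y) ^+ 2 <= 1 * (2 * r0 * y) ^+ 2 by rewrite mul1r -exprMn mulrC hg.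
  by rewrite ler_pM2r // subr_ge0.
set s := sqrtC (algRval (1 - g ^+ 2)).
have sR : s \is Num.real by apply: sqrtC_real.
have s2 : s ^+ 2 = 1 - algRval g ^+ 2 by rewrite sqrtCK rmorphB rmorph1 rmorphXn.
have gR : algRval g \is Num.real by apply: algRvalP.
have yR : algRval y \is Num.real by apply: algRvalP.
have r0R : algRval r0 \is Num.real by apply: algRvalP.
set w := algRval g + 'i * s.
have hw : `|w| = 1 by apply: norm1_sq; rewrite normC2_rect // s2; ring.
have e2 : algRval r0 + algRval y * w = (algRval r0 + algRval y * algRval g) + 'i * (algRval y * s) by rewrite /w; ring.
have hv : `|algRval r0 + algRval y * w| = algRval x.
  apply/eqP; rewrite -(@eqrXn2 _ 2) //.
  have R1 : algRval r0 + algRval y * algRval g \is Num.real by rewrite rpredD // rpredM.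
  have R2 : algRval y * s \is Num.real by rewrite rpredM.
  rewrite e2 (normC2_rect R1 R2) [(_ * s) ^+ 2]exprMn s2.
  have -> : (algRval r0 + algRval y * algRval g) ^+ 2 + algRval y ^+ 2 * (1 - algRval g ^+ 2) =
            algRval ((r0 + y * g) ^+ 2 + y ^+ 2 * (1 - g ^+ 2)) by rewrite !(rmorphD, rmorphM, rmorphXn, rmorphB, rmorph1).
  apply/eqP; rewrite -rmorphXn; congr algRval.
  have -> : (r0 + y * g) ^+ 2 + y ^+ 2 * (1 - g ^+ 2) = r0 ^+ 2 + 2 * r0 * y * g + y ^+ 2 by ring.
  by rewrite hg /D; ring.
have xC : algRval x != 0 by [].
pose z : algC := - (algRval r0 + algRval y * w) / algRval x.
exists z. exists w. split => //.
  by rewrite normrM normrN hv normfV ger0_norm ?divff //; apply: ltW.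
by rewrite /z; field.
Qed.

Lemma part (I : eqType) (f : I -> algR) (c : algR) : 0 <= c ->
  (forall i, 0 <= f i <= c) -> forall (s : seq I) u, 0 <= u -> u <= 2 * \sum_(i <- s) f i ->
  exists k, `|u - 2 * \sum_(i <- take k s) f i| <= c.
Proof.
move=> c0 hf; elim=> [|x s IH] u u0 us.
  exists 0%N; rewrite big_nil in us; rewrite take0 big_nil mulr0 subr0 ger0_norm //; lra.
have [uc|cu] := lerP u c.
  by exists 0%N; rewrite take0 big_nil mulr0 subr0 ger0_norm.
rewrite big_cons in us; have /andP[fx0 fxc] := hf x.
have [u'0|u'n] := lerP 0 (u - 2 * f x).
  have [k hk] := IH (u - 2 * f x) u'0 ltac:(lra).
  by exists k.+1; rewrite /= big_cons; move: hk; rewrite mulrDr opprD addrA.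
exists 1%N; rewrite /= take0 big_cons big_nil addr0 ler_norml; apply/andP; split; lra.
Qed.

Lemma valle (x y : algR) : (x <= y) = (algRval x <= algRval y). Proof. by []. Qed.
Lemma vallt (x y : algR) : (x < y) = (algRval x < algRval y). Proof. by rewrite !lt_def valle (inj_eq val_inj). Qed.

Lemma phases (I : finType) (a : I -> algC) (i0 : I) :
  (forall i, `|a i| <= `|a i0|) -> 0 < `|a i0| ->
  `|a i0| <= \sum_(i | i != i0) `|a i| ->
  exists c : I -> algC, (forall i, `|c i| = 1) /\ \sum_i (c i)^* * a i = 0.
Proof.
move=> hmax hpos hsum.
pose rR i : algR := in_algR (normr_real (a i)).
pose f i := if i == i0 then 0 else rR i.
pose e := index_enum I.
have r00 : 0 <= rR i0 by rewrite valle rmorph0 /rR /= normr_ge0.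
have hf i : 0 <= f i <= rR i0.
  rewrite /f; case: (i == i0); first by rewrite lexx.
  by rewrite !valle rmorph0 /rR /= normr_ge0 hmax.
pose R := \sum_(i <- e) f i.
have R0 : 0 <= R by apply: sumr_ge0 => i _; case/andP: (hf i).
have R2 : R <= 2 * \sum_(i <- e) f i by rewrite -/R; lra.
have [k hk] := part (s := e) r00 hf R0 R2.
pose x := \sum_(i <- take k e) f i.
pose y := \sum_(i <- drop k e) f i.
have hxy : x + y = R by rewrite /x /y -big_cat cat_take_drop.
have x0 : 0 <= x by apply: sumr_ge0 => i _; case/andP: (hf i).
have y0 : 0 <= y by apply: sumr_ge0 => i _; case/andP: (hf i).
have fE i : algRval (f i) = if i != i0 then `|a i| else 0.
  by rewrite /f; case: (i == i0).
have hR : rR i0 <= R.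
  by rewrite valle /R rmorph_sum (eq_bigr _ (fun i _ => fE i)) -big_mkcond.
move: hk; rewrite -/x -hxy ler_norml => /andP [hk1 hk2].
have [z [w [hz hw hzw]]] := tri (r0 := rR i0) (x := x) (y := y) (ltac:(by rewrite vallt rmorph0)) x0 y0 (ltac:(lra)) (ltac:(lra)) (ltac:(lra)).
pose zeta i := if i == i0 then 1 else if i \in take k e then z else w.
pose zeta' i := if i \in take k e then z else w.
pose p i := if a i == 0 then 1 else a i / `|a i|.
exists (fun i => (zeta i)^* * p i); split.
  move=> i; rewrite normrM norm_conjC.
  have -> : `|zeta i| = 1 by rewrite /zeta; case: (i == i0); [rewrite normr1 | case: (i \in take k e)].
  rewrite mul1r /p; case: eqP => [_|/eqP an]; first by rewrite normr1.
  by rewrite normrM normfV normr_id divff // normr_eq0.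
have pa i : (p i)^* * a i = `|a i|.
  rewrite /p; case: eqP => [->|/eqP an]; first by rewrite mulr0 normr0.
  rewrite rmorphM /= fmorphV /= conj_normC mulrAC [_^* * _]mulrC -normCK.
  by rewrite expr2 mulfK // normr_eq0.
have -> : \sum_i ((zeta i)^* * p i)^* * a i = \sum_i zeta i * `|a i|.
  by apply: eq_bigr => i _; rewrite rmorphM /= conjCK -mulrA pa.
rewrite (bigD1 i0) //= /zeta eqxx mul1r.
have -> : \sum_(i | i != i0) (if i == i0 then 1 else if i \in take k e then z else w) * `|a i|
   = \sum_(i <- e) zeta' i * algRval (f i).
  rewrite big_mkcond; apply: eq_bigr => i _; rewrite fE /zeta'.
  by case: (i == i0) => /=; rewrite ?mulr0 // mulrC.
rewrite -{1}(cat_take_drop k e) big_cat /=.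
have -> : \sum_(i <- take k e) zeta' i * algRval (f i) = z * algRval x.
  rewrite /x rmorph_sum mulr_sumr; apply: eq_big_seq => i ii.
  by rewrite /zeta' ii.
have -> : \sum_(i <- drop k e) zeta' i * algRval (f i) = w * algRval y.
  rewrite /y rmorph_sum mulr_sumr; apply: eq_big_seq => i ii.
  have : i \notin take k e.
    have := index_enum_uniq I; rewrite -/e -{1}(cat_take_drop k e) cat_uniq.
    case/and3P => _ /hasPn h _; exact: h.
  by rewrite /zeta' => /negbTE ->.
by rewrite -hzw /=; ring.
Qed.

Lemma mx11P (A B : 'M[algC]_1) : A 0 0 = B 0 0 -> A = B.
Proof. by move=> h; apply/matrixP => i j; rewrite !ord1. Qed.

Section Basis.
Variables (I : finType) (n : nat) (v : I -> 'cV[algC]_n).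
Hypothesis v_orth : forall i j, adjmx (v i) *m v j = (i == j)%:R%:M.
Hypothesis v_span : forall x : 'cV[algC]_n, exists c : I -> algC, x = \sum_i c i *: v i.

Lemma inner (al be : I -> algC) :
  (adjmx (\sum_i al i *: v i) *m (\sum_i be i *: v i)) 0 0 = \sum_i (al i)^* * be i.
Proof.
rewrite adjmx_sum mulmx_suml summxE; apply: eq_bigr => i _.
rewrite adjmxZ mulmx_sumr summxE (bigD1 i) //= big1 ?addr0.
  by rewrite -scalemxAl -scalemxAr v_orth eqxx !mxE eqxx /= !mulr1n mulr1.
by move=> j /negbTE ji; rewrite -scalemxAl -scalemxAr v_orth eq_sym ji !mxE mulr0n !mulr0.
Qed.

Lemma resolution : \sum_i v i *m adjmx (v i) = 1%:M.
Proof.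
have hA (x : 'cV[algC]_n) : (\sum_i v i *m adjmx (v i)) *m x = x.
  have [c ->] := v_span x.
  rewrite mulmx_suml; apply: eq_bigr => i _.
  rewrite -mulmxA mulmx_sumr (bigD1 i) //= big1 ?addr0.
    by rewrite -scalemxAr v_orth eqxx -scalemxAr mul_mx_scalar /= mulr1n scale1r.
  by move=> j /negbTE ji; apply: mx11P; rewrite -scalemxAr v_orth eq_sym ji !mxE mulr0n mulr0.
apply/matrixP => p q.
have := congr1 (fun M : 'cV[algC]_n => M p 0) (hA (delta_mx q 0)).
rewrite -colE !mxE => ->; by rewrite eqxx andbT.
Qed.

Lemma ketbra_sum (al : I -> algC) :
  ketbra (\sum_i al i *: v i) = \sum_i \sum_j (al i * (al j)^*) *: (v i *m adjmx (v j)).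
Proof.
rewrite /ketbra adjmx_sum mulmx_suml; apply: eq_bigr => i _.
rewrite mulmx_sumr; apply: eq_bigr => j _.
by rewrite adjmxZ -scalemxAl -scalemxAr scalerA.
Qed.
End Basis.

Lemma psd_ketbra n (k : algC) (u : 'cV[algC]_n) : 0 <= k -> psd (k *: ketbra u).
Proof.
move=> k0; split.
  by rewrite adjmxZ /ketbra adjmxM adjmxK conj_Creal // ger0_real.
move=> x; rewrite -scalemxAr -scalemxAl mxE /ketbra !mulmxA -(mulmxA _ (adjmx u)).
have -> : adjmx u *m x = adjmx (adjmx x *m u) by rewrite adjmxM adjmxK.
rewrite mxE big_ord1 adjmxE.
by apply: mulr_ge0 => //; apply: mul_conjC_ge0.
Qed.

Lemma chi_orth (gT : finGroupType) (G : {group gT}) (i j : Iirr G) :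
  \sum_(g in G) 'chi_i g * ('chi_j g)^* = #|G|%:R * (i == j)%:R.
Proof.
have := cfdot_irr i j; rewrite cfdotE => <-.
by rewrite mulrA divff ?mul1r // neq0CG.
Qed.

Lemma if_dir (gT : finGroupType) (G : {group gT})
  (n : nat) (v : Iirr G -> 'cV[algC]_n) (U : gT -> 'M[algC]_n)
  (v_orth : forall i j, adjmx (v i) *m v j = (i == j)%:R%:M)
  (v_span : forall x : 'cV[algC]_n, exists c : Iirr G -> algC,
              x = \sum_i c i *: v i)
  (U_unitary : forall g, g \in G ->
                 adjmx (U g) *m U g = 1%:M /\ U g *m adjmx (U g) = 1%:M)
  (U_eig : forall g i, g \in G -> U g *m v i = 'chi_i g *: v i)
  (a : Iirr G -> algC)
  (psi_unit : adjmx (\sum_i a i *: v i) *m (\sum_i a i *: v i) = 1%:M)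
  (i0 : Iirr G) (i0_max : forall i, `|a i| <= `|a i0|) :
  `|a i0| <= \sum_(i | i != i0) `|a i| ->
  conclusive_exclusion G (fun g => U g *m (\sum_i a i *: v i)).
Proof.
move=> hsum.
have hpos : 0 < `|a i0|.
  rewrite lt_def normr_ge0 andbT; apply/negP => /eqP h0.
  have := congr1 (fun M : 'M[algC]_1 => M 0 0) psi_unit.
  rewrite inner // big1 ?mxE ?eqxx /=; last first.
    move=> i _; have := i0_max i; rewrite h0 normr_le0 => /eqP ->.
    by rewrite mulr0.
  by move/eqP; rewrite eq_sym oner_eq0.
have [c [hc hca]] := phases i0_max hpos hsum.
set psi := \sum_i a i *: v i.
set phi := \sum_i c i *: v i.
have phipsi : adjmx phi *m psi = 0.
  by apply: mx11P; rewrite inner // hca mxE.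
have Uphi g : g \in G -> U g *m phi = \sum_i (c i * 'chi_i g) *: v i.
  move=> gG; rewrite /phi mulmx_sumr; apply: eq_bigr => i _.
  by rewrite -scalemxAr U_eig // scalerA.
pose k : algC := #|G|%:R^-1.
have k0 : 0 <= k by rewrite invr_ge0 ler0n.
exists (fun g => k *: ketbra (U g *m phi)); split; first split.
- by move=> g _; apply: psd_ketbra.
- rewrite -scaler_sumr.
  have -> : \sum_(g in G) ketbra (U g *m phi) =
      \sum_(g in G) \sum_i \sum_j ((c i * 'chi_i g) * (c j * 'chi_j g)^*) *: (v i *m adjmx (v j)).
    by apply: eq_bigr => g gG; rewrite Uphi // ketbra_sum.
  rewrite exchange_big /=.
  have -> : \sum_i \sum_(g in G) \sum_j ((c i * 'chi_i g) * (c j * 'chi_j g)^*) *: (v i *m adjmx (v j))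
     = \sum_i #|G|%:R *: (v i *m adjmx (v i)).
    apply: eq_bigr => i _; rewrite exchange_big /= (bigD1 i) //= [X in _ + X]big1 ?addr0.
      rewrite -scaler_suml.
      have -> : \sum_(g in G) c i * 'chi_i g * (c i * 'chi_i g)^* = c i * (c i)^* * #|G|%:R.
        have e := chi_orth i i; rewrite eqxx mulr1 in e; rewrite -e mulr_sumr.
        apply: eq_bigr => g _; rewrite rmorphM /=; ring.
      by rewrite -normCK hc expr1n mul1r.
    move=> j ji; rewrite -scaler_suml.
    have -> : \sum_(g in G) c i * 'chi_i g * (c j * 'chi_j g)^* = c i * (c j)^* * (#|G|%:R * (i == j)%:R).
      rewrite -chi_orth mulr_sumr; apply: eq_bigr => g _; rewrite rmorphM /=; ring.
    by rewrite eq_sym (negbTE ji) mulr0 mulr0 scale0r.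
  by rewrite -scaler_sumr resolution // scalerA mulVf ?neq0CG // scale1r.
move=> g gG; rewrite tr_ketbra /Bf -scalemxAr -scalemxAl mxE /ketbra.
have hz : adjmx (U g *m phi) *m (U g *m psi) = 0.
  by rewrite adjmxM -mulmxA (mulmxA (adjmx (U g))) (proj1 (U_unitary g gG)) mul1mx phipsi.
have -> : adjmx (U g *m psi) *m (U g *m phi *m adjmx (U g *m phi)) *m (U g *m psi)
  = (adjmx (U g *m psi) *m (U g *m phi)) *m (adjmx (U g *m phi) *m (U g *m psi)) by rewrite !mulmxA.
by rewrite hz mulmx0 mxE mulr0.
Qed.
End Helpers.
Import Helpers.

Theorem proposition1 (gT : finGroupType) (G : {group gT}) (cG : abelian G)
  (n : nat) (v : Iirr G -> 'cV[algC]_n) (U : gT -> 'M[algC]_n)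
  (* {v_mu} is an orthonormal basis of H = C^n *)
  (v_orth : forall i j, adjmx (v i) *m v j = (i == j)%:R%:M)
  (v_span : forall x : 'cV[algC]_n, exists c : Iirr G -> algC,
              x = \sum_i c i *: v i)
  (* g |-> U_g is a unitary representation of G *)
  (U_unitary : forall g, g \in G ->
                 adjmx (U g) *m U g = 1%:M /\ U g *m adjmx (U g) = 1%:M)
  (U_mul : forall g h, g \in G -> h \in G -> U (g * h)%g = U g *m U h)
  (U_eig : forall g i, g \in G -> U g *m v i = 'chi_i g *: v i)
  (a : Iirr G -> algC)
  (psi_unit : adjmx (\sum_i a i *: v i) *m (\sum_i a i *: v i) = 1%:M)
  (i0 : Iirr G) (i0_max : forall i, `|a i| <= `|a i0|) :
  conclusive_exclusion G (fun g => U g *m (\sum_i a i *: v i))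
  <-> `|a i0| <= \sum_(i | i != i0) `|a i|.
Proof.
split.
  exact: only_if v_orth U_unitary U_eig a i0.
by move=> h; eapply if_dir; eauto.
Qed.
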